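(* The binary word $101$ has an internal zero at $n=6$ and at no other $n\ge0$.
   Context: $c_p(w)$ is the number of occurrences of $p$ as a (not necessarily consecutive) subsequence of $w$; $B_{n,p}(k)$ is the number of binary words of length $n$ with $c_p(w)=k$. $p$ has an internal zero at $n$ if there exist $0\le k_1<k_2<k_3$ with $B_{n,p}(k_1)\ne0$, $B_{n,p}(k_2)=0$, $B_{n,p}(k_3)\ne0$. *)

(* Defs.v *)
From mathcomp Require Import all_boot.
Set Implicit Arguments. Unset Strict Implicit. Unset Printing Implicit Defensive.

(* Binary words: letters are bool, with false = 0 and true = 1. *)

(* c_p(w): number of occurrences of p as a (not necessarily consecutive)
   subsequence of w, i.e. number of index sets S (listed increasingly, as
   [enum S] is for ordinals) with the letters of w at S spelling p. *)
Definition occ (p w : seq bool) : nat :=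
  #|[set S : {set 'I_(size w)} |
      [seq nth false w (nat_of_ord i) | i <- enum S] == p]|.

Definition B (n : nat) (p : seq bool) (k : nat) : nat :=
  #|[set w : n.-tuple bool | occ p w == k]|.

Definition internal_zero (p : seq bool) (n : nat) : Prop :=
  exists k1 k2 k3 : nat, [/\ k1 < k2, k2 < k3,
    B n p k1 != 0, B n p k2 = 0 & B n p k3 != 0].

Definition w101 : seq bool := [:: true; false; true].

(* Main.v *)
Require Import Defs.
From mathcomp Require Import all_boot zify.
Set Implicit Arguments. Unset Strict Implicit. Unset Printing Implicit Defensive.

Fixpoint cnt (p w : seq bool) : nat :=
  match w with
  | [::] => (p == [::])
  | x :: w' => cnt p w' + (if p is a :: p' then (x == a) * cnt p' w' else 0)
  end.

Definition bits n (S : {set 'I_n}) : seq bool := [seq i \in S | i <- enum 'I_n].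

Lemma occ_mask (p w : seq bool) :
  occ p w = \sum_(S : {set 'I_(size w)}) (mask (bits S) w == p).
Proof.
rewrite /occ -sum1_card big_mkcond /=; apply: eq_bigr => S _.
rewrite inE.
have -> : [seq nth false w (nat_of_ord i) | i <- enum S] = mask (bits S) w.
  rewrite /bits {1}/enum_mem -enumT filter_mask map_mask.
  congr (mask _ _).
  transitivity (map (nth false w) (iota 0 (size w))).
    by rewrite -val_enum_ord -map_comp.
  by rewrite map_nth_iota0 // take_size.
by case: (_ == p).
Qed.

Definition phi n (x : bool * {set 'I_n}) : {set 'I_n.+1} :=
  (if x.1 then [set ord0] else set0) :|: (lift ord0) @: x.2.
Definition psi n (S : {set 'I_n.+1}) : bool * {set 'I_n} :=
  (ord0 \in S, [set i | lift ord0 i \in S]).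

Lemma ord0_lift n (S : {set 'I_n}) : (ord0 : 'I_n.+1) \in lift ord0 @: S = false.
Proof. by apply/negbTE/imsetP => [[j _]] /eqP; rewrite (negbTE (neq_lift _ _)). Qed.

Lemma phiK n : cancel (@phi n) (@psi n).
Proof.
case=> b S; rewrite /phi /psi /=; congr (_, _).
  rewrite in_setU ord0_lift.
  by case: b; rewrite ?in_set1 ?in_set0 ?eqxx.
apply/setP => i; rewrite inE in_setU mem_imset; last exact: lift_inj.
by case: b; rewrite ?in_set1 ?in_set0 //= eq_sym (negbTE (neq_lift _ _)).
Qed.

Lemma psiK n : cancel (@psi n) (@phi n).
Proof.
move=> S; apply/setP => i; rewrite /phi /psi /= in_setU.
have [j ->|->] := unliftP ord0 i; last first.
  rewrite ord0_lift orbF.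
  by case: (ord0 \in S); rewrite ?in_set1 ?in_set0 ?eqxx.
rewrite mem_imset; last exact: lift_inj.
rewrite inE; case: (lift ord0 j \in S); rewrite ?in_set1 ?in_set0 ?orbF //=;
  case: (ord0 \in S); rewrite ?in_set1 ?in_set0 //= eq_sym (negbTE (neq_lift _ _)).
Qed.

Lemma bits_phi n x : bits (@phi n x) = x.1 :: bits x.2.
Proof.
case: x => b S; have E := phiK (b, S).
rewrite /bits enum_ordSl /= -map_comp; congr (_ :: _).
  by have := congr1 fst E.
apply: eq_map => i /=; have := congr1 snd E => /= /setP /(_ i).
by rewrite inE.
Qed.

Lemma sum_rec n (F : seq bool -> nat) :
  \sum_(S : {set 'I_n.+1}) F (bits S) =
  \sum_(S : {set 'I_n}) F (true :: bits S) + \sum_(S : {set 'I_n}) F (false :: bits S).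
Proof.
rewrite (reindex (@phi n)); last first.
  by exists (@psi n) => x _; [exact: phiK | exact: psiK].
rewrite -(pair_big xpredT xpredT (fun b S => F (bits (phi (b, S))))) /=.
by rewrite big_bool /=; congr (_ + _); apply: eq_bigr => S _; rewrite bits_phi.
Qed.

Lemma N_cnt p w : \sum_(S : {set 'I_(size w)}) (mask (bits S) w == p) = cnt p w.
Proof.
elim: w p => [|x w IH] p /=.
  rewrite (bigD1 set0) //= big1 ?addn0; first by rewrite mask0 eq_sym.
  by move=> S /eqP []; apply/setP => -[].
rewrite (@sum_rec _ (fun m => mask m (x :: w) == p)) /= addnC IH; congr (_ + _).
case: p => [|a p] /=.
  by rewrite big1.
rewrite -IH big_distrr /=; apply: eq_bigr => S _.
by rewrite eqseq_cons; case: (x == a); case: (_ == p).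
Qed.

Definition c1 w := cnt [:: true] w.
Definition c01 w := cnt [:: false; true] w.
Definition c101 w := cnt [:: true; false; true] w.

Lemma cnt_nil w : cnt [::] w = 1.
Proof. by elim: w => //= x w ->; rewrite addn0. Qed.

Lemma c1E x w : c1 (x :: w) = c1 w + x.
Proof. by rewrite /c1 /= cnt_nil muln1; case: x. Qed.
Lemma c01E x w : c01 (x :: w) = c01 w + (~~ x) * c1 w.
Proof. by rewrite /c01 /=; case: x. Qed.
Lemma c101E x w : c101 (x :: w) = c101 w + x * c01 w.
Proof. by rewrite /c101 /=; case: x. Qed.
Lemma c1_nil : c1 [::] = 0. Proof. by []. Qed.
Lemma c01_nil : c01 [::] = 0. Proof. by []. Qed.
Lemma c101_nil : c101 [::] = 0. Proof. by []. Qed.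

Definition g m := m./2 * (m - m./2).

Lemma gbound a b : a * b <= g (a + b).
Proof.
rewrite /g; have := odd_double_half (a + b).
move: ((a + b)./2) => h; case: (odd (a + b)) => /= E.
  have [le|lt] := leqP a h.
    have [d hd] : exists d, h = a + d by exists (h - a); lia.
    subst h; have -> : b = a + 2 * d + 1 by lia.
    nia.
  have [d hd] : exists d, a = h + 1 + d by exists (a - h - 1); lia.
  subst a; have -> : b = h - d by lia.
  have : d <= h by lia.
  nia.
have [le|lt] := leqP a h.
  have [d hd] : exists d, h = a + d by exists (h - a); lia.
  subst h; have -> : b = a + 2 * d by lia.
  nia.
have [d hd] : exists d, a = h + d by exists (a - h); lia.
subst a; have -> : b = h - d by lia.
have : d <= h by lia.
nia.
Qed.

Definition zeros w := count negb w.

Lemma Qbound a w : c101 w + a * c01 w <= zeros w * g (a + c1 w).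
Proof.
elim: w a => [|x w IH] a; first by rewrite c101_nil c01_nil muln0.
rewrite c101E c01E c1E /=; case: x => /=.
  have := IH a.+1; have -> : a + (c1 w + 1) = a.+1 + c1 w by lia.
  nia.
have := IH a; have := gbound a (c1 w); rewrite /zeros /= addn0.
nia.
Qed.

Lemma c101_bound w : c101 w <= zeros w * g (c1 w).
Proof. by have := Qbound 0 w; rewrite mul0n addn0 add0n. Qed.

Definition F n := foldr maxn 0 [seq (n - 2 * h) * (h * h) | h <- iota 0 n.+1].

Lemma foldr_max_ge (s : seq nat) x : x \in s -> x <= foldr maxn 0 s.
Proof.
elim: s => //= y s IH; rewrite in_cons => /orP [/eqP ->|/IH]; first exact: leq_maxl.
by move=> H; apply: leq_trans H (leq_maxr _ _).
Qed.

Lemma foldr_max_in (s : seq nat) : foldr maxn 0 s \in 0 :: s.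
Proof.
elim: s => //= y s; rewrite !in_cons => /orP [/eqP ->|H].
  by rewrite maxn0 eqxx orbT.
by case: (leqP y (foldr maxn 0 s)) => le; rewrite ?H ?eqxx !orbT.
Qed.

Lemma F_ge n h : h <= n -> (n - 2 * h) * (h * h) <= F n.
Proof.
move=> hn; apply: foldr_max_ge; apply/mapP; exists h => //.
by rewrite mem_iota add0n ltnS hn.
Qed.

Lemma F_eq n : exists h, h <= n /\ F n = (n - 2 * h) * (h * h).
Proof.
have := foldr_max_in [seq (n - 2 * h) * (h * h) | h <- iota 0 n.+1].
rewrite -/(F n) in_cons => /orP [/eqP ->|/mapP [h]].
  by exists 0; split; lia.
by rewrite mem_iota add0n ltnS => hn ->; exists h.
Qed.

Lemma c1_count w : c1 w = count id w.
Proof. by elim: w => //= x w IH; rewrite c1E IH addnC. Qed.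

Lemma size_zc w : size w = zeros w + c1 w.
Proof. by rewrite c1_count /zeros addnC -(count_predC id) . Qed.

Lemma c101_F w : c101 w <= F (size w).
Proof.
apply: leq_trans (c101_bound w) _; rewrite size_zc /g.
move: (zeros w) (c1 w) => z m.
have := odd_double_half m; move: (m./2) => h; case: (odd m) => /= E.
  have -> : m - h = h + 1 by lia.
  have [le|lt] := leqP z h.
    apply: leq_trans (F_ge (h := h) _); last by lia.
    have -> : z + m - 2 * h = z + 1 by lia.
    nia.
  apply: leq_trans (F_ge (h := h + 1) _); last by lia.
  have -> : z + m - 2 * (h + 1) = z - 1 by lia.
  have [z' Ez] : exists z', z = z' + 1 by exists (z - 1); lia.
  subst z; have -> : z' + 1 - 1 = z' by lia.
  have : h <= z' by lia.
  nia.
have -> : m - h = h by lia.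
apply: leq_trans (F_ge (h := h) _); last by lia.
by have -> : z + m - 2 * h = z by lia.
Qed.

Fixpoint ins (i : nat) (w : seq bool) {struct w} : seq bool :=
  match w with
  | [::] => [:: false]
  | x :: w' => if i is i'.+1 then (if x then true :: ins i' w' else false :: ins i w')
               else false :: w
  end.

Lemma ins_size i w : size (ins i w) = (size w).+1.
Proof. by elim: w i => [|x w IH] [|i] //=; case: x => /=; rewrite IH. Qed.

Lemma ins_c1 i w : c1 (ins i w) = c1 w.
Proof.
elim: w i => [|x w IH] [|i] //=; rewrite ?c1E //; by case: x; rewrite ?c1E ?IH /= ?addn0.
Qed.

Lemma ins_c i w : i <= c1 w ->
  c01 (ins i w) = c01 w + (c1 w - i) /\ c101 (ins i w) = c101 w + i * (c1 w - i).
Proof.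
elim: w i => [|x w IH] [|i] //=.
- by move=> _; rewrite c01E c101E /=; split; lia.
- case: x; rewrite !c1E => H.
    have [E1 E2] := IH i (ltac:(lia)).
    rewrite !c01E !c101E /= E1 E2; split; lia.
  have [E1 E2] := IH i.+1 (ltac:(lia)).
  rewrite !c01E !c101E /= E1 E2 ins_c1; split; nia.
Qed.

Fixpoint build (h : nat) (l : seq nat) : seq bool :=
  if l is j :: l' then ins (h - j) (build h l') else nseq (2 * h) true.

Lemma nseq_c m : c1 (nseq m true) = m /\ c01 (nseq m true) = 0 /\ c101 (nseq m true) = 0.
Proof.
elim: m => [|m [E1 [E2 E3]]] //=.
by rewrite c1E c01E c101E E1 E2 E3; split; lia.
Qed.

Lemma build_size h l : size (build h l) = 2 * h + size l.
Proof. by elim: l => [|j l IH] /=; rewrite ?size_nseq ?addn0 // ins_size IH addnS. Qed.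

Lemma build_c1 h l : c1 (build h l) = 2 * h.
Proof. elim: l => [|j l IH] /=; [by case: (nseq_c (2 * h)) | by rewrite ins_c1 IH]. Qed.

Lemma build_c101 h l : all (fun j => j <= h) l ->
  c101 (build h l) = sumn [seq (h - j) * (2 * h - (h - j)) | j <- l].
Proof.
elim: l => [|j l IH] /=; first by case: (nseq_c (2 * h)) => _ [].
move=> /andP [jh al]; have := @ins_c (h - j) (build h l).
rewrite build_c1 => /(_ ltac:(lia)) [_ ->]; rewrite IH //; lia.
Qed.

Lemma sum_sq h l : all (fun j => j <= h) l ->
  sumn [seq (h - j) * (2 * h - (h - j)) | j <- l] + sumn [seq j * j | j <- l]
  = size l * (h * h).
Proof.
elim: l => [|j l IH] //= /andP [jh al]; have := IH al.
have : (h - j) * (2 * h - (h - j)) + j * j = h * h.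
  have [d Ed] : exists d, h = j + d by exists (h - j); lia.
  subst h; have -> : j + d - j = d by lia.
  have -> : 2 * (j + d) - d = 2 * j + d by lia.
  nia.
lia.
Qed.

Lemma isqrt D : exists j, j * j <= D < j.+1 * j.+1.
Proof.
elim: D => [|D [j /andP [H1 H2]]]; first by exists 0.
case: (ltnP D.+1 (j.+1 * j.+1)) => H.
  by exists j; rewrite H andbT; lia.
by exists j.+1; apply/andP; split; lia.
Qed.

Definition sq5 (D : nat) : seq nat :=
  nth [::] [:: [::]; [::1]; [::1;1]; [::1;1;1]; [::2]; [::2;1]; [::2;1;1]; [::2;1;1;1];
    [::2;2]; [::3]; [::3;1]; [::3;1;1]; [::2;2;2]; [::3;2]; [::3;2;1]; [::3;2;1;1];
    [::4]; [::4;1]; [::3;3]; [::3;3;1]; [::4;2]; [::4;2;1]; [::3;3;2]; [::3;3;2;1];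
    [::4;2;2]] D.

Definition sqok h D (s : seq nat) :=
  [&& size s <= h - 1, all (fun j => j < h) s & sumn [seq j * j | j <- s] == D].

Lemma sq5_ok : all (fun D => sqok 5 D (sq5 D)) (iota 0 25).
Proof. by vm_compute. Qed.

Lemma Sq h D : 5 <= h -> D < h * h -> exists s, sqok h D s.
Proof.
move=> h5; have [k ->] : exists k, h = 5 + k by exists (h - 5); lia.
elim: k D => [|k IH] D HD.
  exists (sq5 D); move/allP: sq5_ok; apply; rewrite mem_iota; lia.
have [j /andP [j1 j2]] := isqrt D.
have [s /and3P [s1 s2 /eqP s3]] := IH (D - j * j) (ltac:(nia)).
exists (j :: s); apply/and3P; split => /=.
- lia.
- rewrite (_ : j < 5 + k.+1); last by nia.
  by apply/allP => x /(allP s2); lia.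
- apply/eqP; rewrite s3; lia.
Qed.

Definition Ach n k := exists w : seq bool, size w = n /\ c101 w = k.

Lemma ach_step n k : 14 <= n -> (forall k, k <= F n.-1 -> Ach n.-1 k) ->
  k <= F n -> Ach n k.
Proof.
move=> n14 IH kF.
case: (leqP k (F n.-1)) => kF1.
  have [w [sw cw]] := IH k kF1.
  exists (false :: w); split; first by rewrite /= sw; lia.
  by rewrite c101E /= mul0n addn0.
have [h [hn Fh]] := F_eq n.
rewrite Fh in kF.
have hn1 : h <= n.-1.
  case: (leqP h n.-1) => // H; have : h = n by lia.
  move=> E; subst h; move: kF; rewrite (_ : n - 2 * n = 0); lia.
have F1 := F_ge hn1.
have n2h : 2 * h < n.
  case: (ltnP (2 * h) n) => // H; move: kF; rewrite (_ : n - 2 * h = 0); lia.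
have h1 : 1 <= h.
  case: (posnP h) => // E; move: kF; rewrite E; lia.
have [z Ez] : exists z, n = z + 2 * h by exists (n - 2 * h); lia.
subst n.
have z1 : 1 <= z by lia.
rewrite (_ : z + 2 * h - 2 * h = z) in kF Fh; last by lia.
rewrite (_ : (z + 2 * h).-1 - 2 * h = z - 1) in F1; last by lia.
have Fm := F_ge (n := z + 2 * h) (h := h - 1) (ltac:(lia)).
have Fp := F_ge (n := z + 2 * h) (h := h + 1) (ltac:(lia)).
rewrite Fh in Fm Fp.
rewrite (_ : z + 2 * h - 2 * (h - 1) = z + 2) in Fm; last by lia.
rewrite (_ : z + 2 * h - 2 * (h + 1) = z - 2) in Fp; last by lia.
have zh : h - 1 <= z.
  case: (leqP (h - 1) z) => // H.
  have [d Ed] : exists d, h = z + 2 + d by exists (h - z - 2); lia.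
  subst h; rewrite (_ : z + 2 + d - 1 = z + d + 1) in Fm; last by lia.
  clear -Fm; nia.
have h5 : 5 <= h.
  case: (leqP 5 h) => // H.
  have [z' Ez] : exists z', z = z' + 6 by exists (z - 6); lia.
  subst z; rewrite (_ : z' + 6 - 2 = z' + 4) in Fp; last by lia.
  clear -Fp H; move: Fp; case: h H => [|[|[|[|[|h]]]]] //= _; lia.
pose D := z * (h * h) - k.
have DB : D < h * h.
  rewrite /D; have [z' Ez] : exists z', z = z' + 1 by exists (z - 1); lia.
  subst z; rewrite (_ : z' + 1 - 1 = z') in F1; last by lia.
  clear -F1 kF1 kF; nia.
have [s /and3P [s1 s2 /eqP s3]] := Sq h5 DB.
pose l := s ++ nseq (z - size s) 0.
have al : all (fun j => j <= h) l.
  rewrite all_cat; apply/andP; split.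
    by apply/allP => x /(allP s2); lia.
  by apply/allP => x /nseqP [-> _].
have sl : size l = z by rewrite size_cat size_nseq; lia.
exists (build h l); split; first by rewrite build_size sl; lia.
have := sum_sq al; rewrite build_c101 // sl.
rewrite /l !map_cat !sumn_cat.
have -> : sumn [seq j * j | j <- nseq (z - size s) 0] = 0.
  by elim: (z - size s) => //= m ->.
rewrite s3 /D; move: kF; set X := z * (h * h); lia.
Qed.

Fixpoint allwords n : seq (seq bool) :=
  if n is n'.+1 then map (cons true) (allwords n') ++ map (cons false) (allwords n') else [:: [::]].

Lemma allwords_size n w : w \in allwords n -> size w = n.
Proof.
elim: n w => [|n IH] w /=; first by rewrite inE => /eqP ->.
rewrite mem_cat => /orP [] /mapP [u /IH <- ->] //.
Qed.

Lemma allwords_mem w : w \in allwords (size w).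
Proof.
elim: w => [|x w IH] //=; rewrite mem_cat; case: x.
  by rewrite (map_f (cons true) IH).
by rewrite (map_f (cons false) IH) orbT.
Qed.

Definition mark (s : nat) (l : seq nat) :=
  foldr (fun v b => set_nth false b v true) (nseq s false) l.

Lemma mark_in s l k : nth false (mark s l) k -> k \in l.
Proof.
elim: l => [|v l IH] /=; first by rewrite nth_nseq if_same.
rewrite nth_set_nth /= inE; case: eqP => [->|_ /IH ->]; rewrite ?eqxx ?orbT //.
Qed.

Definition check_n n :=
  let V := mark (F n).+1 [seq c101 w | w <- allwords n] in
  all (fun k => nth false V k) (iota 0 (F n).+1).

Lemma base_ok : all (fun n => (n == 6) || check_n n) (iota 0 14).
Proof. by vm_compute. Qed.

Lemma six_ok : all (fun w => c101 w != 5) (allwords 6).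
Proof. by vm_compute. Qed.

Lemma ach_base n k : n < 14 -> n != 6 -> k <= F n -> Ach n k.
Proof.
move=> n14 n6 kF; move/allP: base_ok => /(_ n); rewrite mem_iota add0n => /(_ n14).
rewrite (negbTE n6) /= /check_n => /allP /(_ k); rewrite mem_iota add0n ltnS => /(_ kF).
by move/mark_in; case/mapP => w /allwords_size sw ->; exists w.
Qed.

Lemma ach_all n k : n != 6 -> k <= F n -> Ach n k.
Proof.
elim: n k => [|n IH] k n6 kF; first exact: ach_base.
case: (ltnP n.+1 14) => H; first exact: ach_base.
apply: ach_step => // k' Hk'; apply: IH => //; lia.
Qed.

Lemma occ_c101 w : occ w101 w = c101 w.
Proof. by rewrite occ_mask N_cnt. Qed.

Lemma B_ach n k : B n w101 k != 0 <-> Ach n k.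
Proof.
rewrite /B cards_eq0; split.
  case/set0Pn => t; rewrite inE occ_c101 => /eqP <-.
  by exists t; rewrite size_tuple.
case=> w [sw cw]; apply/set0Pn; exists (Tuple (introT eqP sw)).
by rewrite inE occ_c101 /= cw.
Qed.

Theorem mainTheorem17 : forall n : nat, internal_zero w101 n <-> n = 6.
Proof.
move=> n; split.
  case=> k1 [k2 [k3 [l12 l23 _ B2 B3]]].
  apply/eqP; apply: contraT => n6.
  have [w [sw cw]] := (B_ach n k3).1 B3.
  have kF : k2 <= F n by have := c101_F w; rewrite sw cw; lia.
  by have := (B_ach n k2).2 (ach_all n6 kF); rewrite B2.
move=> ->; exists 4, 5, 8; split => //.
- by apply/B_ach; exists [:: true; false; false; true; true; false].
- apply/eqP; rewrite -[_ == 0]negbK; apply/negP => /B_ach [w [sw cw]].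
  have := allwords_mem w; rewrite sw => /(allP six_ok); by rewrite cw.
- by apply/B_ach; exists [:: true; true; false; false; true; true].
Qed.
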